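(* Let $p \in \{1, \infty\}$ and let $f:\mathbb{R}^n \to \mathbb{R}^n$ be a Lipschitz, differentiable vector field. Then $f$ is weakly infinitesimally contracting (WIC) with respect to the $p$-norm if and only if there exist a real number $\gamma$ and a differentiable Lipschitz map $\phi:\mathbb{R}^n\to\mathbb{R}^n$ with $\|\phi\|_{\mathrm{Lip},p} \le \gamma$ such that \[ f(x) = -\gamma x + \phi(x) \quad \text{for all } x \in \mathbb{R}^n. \]
   Context: For $x\in\mathbb{R}^n$, $\|x\|_1=\sum_i |x_i|$ and $\|x\|_\infty=\max_i |x_i|$; for a matrix $A$, $\|A\|_p=\sup_{x\neq 0}\|Ax\|_p/\|x\|_p$ is the induced norm. The matrix measure (logarithmic norm) of $A\in\mathbb{R}^{n\times n}$ is $\mu_p(A)=\lim_{h\to 0^+}\frac{\|I+hA\|_p-1}{h}$; explicitly $\mu_1(A)=\max_j\big(a_{jj}+\sum_{i\neq j}|a_{ij}|\big)$ and $\mu_\infty(A)=\max_i\big(a_{ii}+\sum_{j\neq i}|a_{ij}|\big)$. $Df(x)$ denotes the Jacobian of $f$ at $x$. A vector field $f$ is WIC with respect to the $p$-norm if $\sup_{x\in\mathbb{R}^n}\mu_p(Df(x))\le 0$. For a differentiable $\phi:\mathbb{R}^n\to\mathbb{R}^n$, its Lipschitz constant with respect to the $p$-norm is $\|\phi\|_{\mathrm{Lip},p}=\sup_{x\in\mathbb{R}^n}\|D\phi(x)\|_p$. *)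

(* Defs.v *)
From HB Require Import structures.
From mathcomp Require Import all_boot all_order all_algebra.
From mathcomp Require Import all_classical all_reals all_analysis.
Set Implicit Arguments. Unset Strict Implicit. Unset Printing Implicit Defensive.
Import Order.TTheory GRing.Theory Num.Theory.
Import numFieldNormedType.Exports.
Local Open Scope classical_set_scope.
Local Open Scope ring_scope.

Inductive pnorm := P1 | Pinf.

Section Defs.
Variable R : realType.

Definition vnorm (p : pnorm) (n : nat) (x : 'rV[R]_n) : R :=
  match p with
  | P1 => \sum_(i < n) `|x ord0 i|
  | Pinf => \big[Num.max/0]_(i < n) `|x ord0 i|
  end.

(* matrix acting on column-vector coordinates: (A x)_i = sum_j a_ij x_j;
   with row vectors this is x *m A^T *)
Definition mxapply (n : nat) (A : 'M[R]_n) (x : 'rV[R]_n) : 'rV[R]_n :=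
  x *m A^T.

Definition indnorm (p : pnorm) (n : nat) (A : 'M[R]_n) : R :=
  sup [set vnorm p (mxapply A x) / vnorm p x | x in [set x : 'rV[R]_n | x != 0]].

(* matrix measure (logarithmic norm), explicit formulas *)
Definition mxmeasure (p : pnorm) (n : nat) (A : 'M[R]_n) : R :=
  fine match p with
  | P1 => \big[maxe/-oo%E]_(j < n)
             (A j j + \sum_(i < n | i != j) `|A i j|)%:E
  | Pinf => \big[maxe/-oo%E]_(i < n)
             (A i i + \sum_(j < n | j != i) `|A i j|)%:E
  end.

(* Jacobian in the usual convention: (Df x)_{ij} = d f_i / d x_j.
   (mathcomp's 'J f x satisfies v *m 'J f x = 'd f x v, i.e. it is the
   transpose of the usual Jacobian.) *)
Definition Jac (n : nat) (f : 'rV[R]_n -> 'rV[R]_n) (x : 'rV[R]_n) : 'M[R]_n :=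
  (jacobian f x)^T.

Definition differentiable_everywhere (n : nat) (f : 'rV[R]_n -> 'rV[R]_n) :=
  forall x, differentiable f x.

Definition lipschitz_map (p : pnorm) (n : nat) (f : 'rV[R]_n -> 'rV[R]_n) :=
  exists L : R, forall x y, vnorm p (f x - f y) <= L * vnorm p (x - y).

Definition WIC (p : pnorm) (n : nat) (f : 'rV[R]_n -> 'rV[R]_n) :=
  (ereal_sup [set (mxmeasure p (Jac f x))%:E | x in [set: 'rV[R]_n]] <= 0)%E.

Definition lipconst (p : pnorm) (n : nat) (phi : 'rV[R]_n -> 'rV[R]_n) : \bar R :=
  ereal_sup [set (indnorm p (Jac phi x))%:E | x in [set: 'rV[R]_n]].

End Defs.

(* Main.v *)
Require Import Defs.
From HB Require Import structures.
From mathcomp Require Import all_boot all_order all_algebra.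
From mathcomp Require Import all_classical all_reals all_analysis.
From mathcomp Require Import lra.
Import Order.TTheory GRing.Theory Num.Theory.
Import numFieldNormedType.Exports.
Local Open Scope classical_set_scope.
Local Open Scope ring_scope.

Section Helpers.
Variable R : realType.
Variable n : nat.
Implicit Types (x y v : 'rV[R]_n) (A B : 'M[R]_n).

Lemma single_le_sum (F : 'I_n -> R) j : (forall k, 0 <= F k) -> F j <= \sum_k F k.
Proof. by move=> H; rewrite (bigD1 j) //= lerDl sumr_ge0. Qed.

Lemma vnorm_ge0 p x : 0 <= vnorm p x.
Proof. by case: p => /=; [apply: sumr_ge0 | apply: bigmax_ge_id]. Qed.

Lemma coord_le p x j : `|x ord0 j| <= vnorm p x.
Proof. by case: p => /=; [apply: single_le_sum | apply: le_bigmax]. Qed.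

Lemma vnorm_gt0 p x : x != 0 -> 0 < vnorm p x.
Proof.
move=> x0; case/boolP: [exists j, x ord0 j != 0] => [/existsP [j Hj] | /existsPn H].
  by apply: (lt_le_trans _ (coord_le p x j)); rewrite normr_gt0.
exfalso; move/eqP: x0; apply; apply/rowP => j; rewrite mxE.
by move: (H j); rewrite negbK => /eqP.
Qed.

Lemma vnormD p x y : vnorm p (x + y) <= vnorm p x + vnorm p y.
Proof.
case: p => /=.
  by rewrite -big_split /=; apply: ler_sum => i _; rewrite mxE ler_normD.
apply: bigmax_le; first by rewrite addr_ge0 // (vnorm_ge0 Pinf).
move=> i _; rewrite mxE (le_trans (ler_normD _ _)) // lerD //.
  exact: (coord_le Pinf).
exact: (coord_le Pinf).
Qed.

Lemma vnormZ p a x : vnorm p (a *: x) <= `|a| * vnorm p x.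
Proof.
case: p => /=.
  by rewrite mulr_sumr; apply: ler_sum => i _; rewrite mxE normrM.
apply: bigmax_le; first by rewrite mulr_ge0 // (vnorm_ge0 Pinf).
by move=> i _; rewrite mxE normrM ler_wpM2l // (coord_le Pinf).
Qed.

Lemma vnorm_delta p j : vnorm p (delta_mx 0 j : 'rV[R]_n) <= 1.
Proof.
case: p => /=.
  rewrite (bigD1 j) //= mxE !eqxx normr1 big1 ?addr0 // => i /negPf ij.
  by rewrite mxE ij andbF normr0.
apply: bigmax_le => // i _; rewrite mxE; case: (_ && _); by rewrite ?normr1 ?normr0.
Qed.

Lemma mxapplyE A x i : mxapply A x ord0 i = \sum_j A i j * x ord0 j.
Proof. by rewrite /mxapply mxE; apply: eq_bigr => j _; rewrite mxE mulrC. Qed.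

Lemma up1 A x g : (forall j, \sum_i `|A i j| <= g) ->
  vnorm P1 (mxapply A x) <= g * vnorm P1 x.
Proof.
move=> H /=.
apply: (@le_trans _ _ (\sum_i \sum_j `|A i j| * `|x ord0 j|)).
  apply: ler_sum => i _; rewrite mxapplyE (le_trans (ler_norm_sum _ _ _)) //.
  by apply: ler_sum => j _; rewrite normrM.
rewrite exchange_big /= mulr_sumr; apply: ler_sum => j _.
by rewrite -mulr_suml ler_wpM2r.
Qed.

Lemma upinf A x g : 0 <= g -> (forall i, \sum_j `|A i j| <= g) ->
  vnorm Pinf (mxapply A x) <= g * vnorm Pinf x.
Proof.
move=> g0 H /=.
apply: bigmax_le; first by rewrite mulr_ge0 // (vnorm_ge0 Pinf).
move=> i _; rewrite mxapplyE (le_trans (ler_norm_sum _ _ _)) //.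
apply: (@le_trans _ _ (\sum_j `|A i j| * vnorm Pinf x)).
  apply: ler_sum => j _; rewrite normrM ler_wpM2l //; exact: (coord_le Pinf).
by rewrite -mulr_suml ler_wpM2r // (vnorm_ge0 Pinf).
Qed.

Lemma mx_bounded p A : exists K, forall w, vnorm p (mxapply A w) <= K * vnorm p w.
Proof.
exists (\sum_i \sum_j `|A i j|) => w; case: p.
  apply: up1 => j; apply: ler_sum => i _.
  by apply: (single_le_sum (fun k => `|A i k|)).
apply: upinf; first by apply: sumr_ge0 => i _; apply: sumr_ge0.
move=> i; apply: (single_le_sum (fun k => \sum_j `|A k j|)) => k.
exact: sumr_ge0.
Qed.

Lemma indnorm_le p A g : 0 <= g ->
  (forall v, vnorm p (mxapply A v) <= g * vnorm p v) -> indnorm p A <= g.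
Proof.
move=> g0 H; rewrite /indnorm.
set S := (X in sup X).
have [ne|e] := pselect (S !=set0).
  apply: ge_sup => // _ [v /= v0 <-].
  by rewrite ler_pdivrMr ?vnorm_gt0.
have -> : S = set0.
  by apply/seteqP; split => // y Sy; exfalso; apply: e; exists y.
by rewrite sup0.
Qed.

Lemma indnorm_ge p A v : v != 0 ->
  vnorm p (mxapply A v) / vnorm p v <= indnorm p A.
Proof.
move=> v0; have [K HK] := mx_bounded p A.
apply: ub_le_sup; last by exists v.
exists K => _ [w /= w0 <-]; by rewrite ler_pdivrMr ?vnorm_gt0.
Qed.


Definition mterm p A j := match p with
  | P1 => A j j + \sum_(i < n | i != j) `|A i j|
  | Pinf => A j j + \sum_(k < n | k != j) `|A j k|
  end.

Lemma mxmeasureE p A :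
  mxmeasure p A = fine (\big[maxe/-oo%E]_(j < n) (mterm p A j)%:E).
Proof. by case: p. Qed.

Lemma bigmaxe_le0 (g : 'I_n -> R) :
  (fine (\big[maxe/-oo%E]_(j < n) (g j)%:E) <= 0) <-> (forall j, g j <= 0).
Proof.
split.
  move=> H j.
  have [i0 _ E] := @eq_bigmax _ _ _ -oo%E j (fun _ => true)
     (fun j => (g j)%:E) isT (fun i _ => leNye _).
  have : ((g j)%:E <= (g i0)%:E)%E by rewrite -E; apply: le_bigmax.
  by rewrite lee_fin => /le_trans; apply; move: H; rewrite E.
move=> H.
have : (\big[maxe/-oo%E]_(j < n) (g j)%:E <= 0%:E)%E.
  by apply: bigmax_le => [|j _]; rewrite ?leNye // lee_fin.
by case: (\big[maxe/-oo%E]_(j < n) (g j)%:E) => [r||] //=; rewrite lee_fin.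
Qed.

Lemma mxmeasure_le0 p A : mxmeasure p A <= 0 <-> (forall j, mterm p A j <= 0).
Proof. by rewrite mxmeasureE; apply: bigmaxe_le0. Qed.

Lemma back p A B g : (forall i j, A i j = B i j - g * (i == j)%:R) ->
  indnorm p B <= g -> forall j, mterm p A j <= 0.
Proof.
move=> AB Hg j; case: p Hg => Hg /=.
  have e0 : (delta_mx 0 j : 'rV[R]_n) != 0.
    by apply/eqP => /matrixP /(_ ord0 j); rewrite !mxE !eqxx /= => /eqP; rewrite oner_eq0.
  have := le_trans (indnorm_ge P1 B _ e0) Hg.
  have vp := vnorm_gt0 P1 _ e0.
  have v1 := vnorm_delta P1 j.
  set X := vnorm P1 (mxapply B _) => HX.
  have HX' : X <= g.
    apply: le_trans HX; rewrite ler_pdivlMr //; apply: ler_piMr => //.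
    exact: vnorm_ge0.
  have EX : X = \sum_i `|B i j|.
    rewrite /X /mxapply -rowE /=; apply: eq_bigr => i _; by rewrite !mxE.
  move: HX'; rewrite EX (bigD1 j) //= => H1.
  rewrite AB eqxx mulr1.
  rewrite (eq_bigr (fun i => `|B i j|)); last first.
    by move=> i /negPf ij; rewrite AB ij mulr0 subr0.
  have := ler_norm (B j j); lra.
pose s : 'rV[R]_n := \row_k (if k == j then 1 else Num.sg (B j k)).
have s0 : s != 0.
  by apply/eqP => /matrixP /(_ ord0 j); rewrite !mxE !eqxx => /eqP; rewrite oner_eq0.
have := le_trans (indnorm_ge Pinf B _ s0) Hg.
have vp := vnorm_gt0 Pinf _ s0.
have v1 : vnorm Pinf s <= 1.
  apply: bigmax_le => // k _; rewrite mxE; case: (k == j); first by rewrite normr1.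
  by rewrite normr_sg; case: (_ != 0).
set X := vnorm Pinf (mxapply B _) => HX.
have HX' : X <= g.
  apply: le_trans HX; rewrite ler_pdivlMr //; apply: ler_piMr => //.
  exact: (vnorm_ge0 Pinf).
have T1 := coord_le Pinf (mxapply B s) j.
rewrite mxapplyE (bigD1 j) //= mxE eqxx mulr1 in T1.
rewrite (eq_bigr (fun k => `|B j k|)) in T1; last first.
  by move=> k /negPf kj; rewrite mxE kj mulrC -normrEsg.
rewrite AB eqxx mulr1.
rewrite (eq_bigr (fun k => `|B j k|)); last first.
  by move=> k /negPf kj; rewrite AB eq_sym kj mulr0 subr0.
move: HX' T1; rewrite /X.
set Y := \sum_(k < n | k != j) `|B j k|.
have := ler_norm (B j j + Y).
move=> a b c.
have c' : `|B j j + Y| <= vnorm Pinf (mxapply B s) := c.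
lra.
Qed.


Lemma fwd p A B g : 0 <= g -> (forall i j, B i j = A i j + g * (i == j)%:R) ->
  (forall j, - g <= A j j) -> (forall j, mterm p A j <= 0) -> indnorm p B <= g.
Proof.
move=> g0 BA Ad Hm; apply: indnorm_le => // v; case: p Hm => Hm.
  apply: up1 => j; rewrite (bigD1 j) //= BA eqxx mulr1.
  rewrite (eq_bigr (fun i => `|A i j|)); last first.
    by move=> i /negPf ij; rewrite BA ij mulr0 addr0.
  have := Hm j; rewrite /= ger0_norm; have := Ad j; lra.
apply: upinf => // j; rewrite (bigD1 j) //= BA eqxx mulr1.
rewrite (eq_bigr (fun i => `|A j i|)); last first.
  by move=> i /negPf ij; rewrite BA eq_sym ij mulr0 addr0.
have := Hm j; rewrite /= ger0_norm; have := Ad j; lra.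
Qed.

Lemma JacE (f : 'rV[R]_n -> 'rV[R]_n) x i j :
  Jac f x i j = ('d f x (delta_mx 0 j)) ord0 i.
Proof. by rewrite /Jac /jacobian !mxE. Qed.

Lemma diff_coord_bound p (f : 'rV[R]_n -> 'rV[R]_n) x L v k : 0 <= L ->
  (forall x y, vnorm p (f x - f y) <= L * vnorm p (x - y)) ->
  differentiable f x -> `|('d f x v) ord0 k| <= L * vnorm p v.
Proof.
move=> L0 HL Hd; rewrite -deriveE //.
have C : (fun h : R => h^-1 *: (f (h *: v + x) - f x)) @ 0^' --> 'D_v f x.
  have D := diff_derivable (v:=v) Hd. exact: D.
have C2 := cvg_comp _ _ C (@coord_continuous R 1 n ord0 k ('D_v f x)).
have C3 := cvg_norm C2.
apply: (cvgr_to_le (C3 (dnbhs_filter 0))).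
near=> h.
have h0 : h != 0 by near: h; exact: nbhs_dnbhs_neq.
rewrite /= mxE normrM normfV.
have H1 : `|(f (h *: v + x) - f x) ord0 k| <= L * (`|h| * vnorm p v).
  apply: le_trans (coord_le _ _ _) _; apply: le_trans (HL _ _) _.
  by rewrite addrK; apply: ler_wpM2l => //; exact: vnormZ.
rewrite ler_pdivrMl ?normr_gt0 //; apply: le_trans H1 _.
by rewrite mulrCA.
Unshelve. all: by end_near.
Qed.


Lemma Jac_lin_entry (f : 'rV[R]_n -> 'rV[R]_n) (a : R) x i j :
  differentiable f x -> Jac (f + *:%R a) x i j = Jac f x i j + a * (i == j)%:R.
Proof.
move=> Hd.
set g := (f + _).
apply: (etrans (JacE g x i j)); apply: esym.
apply: (etrans (f_equal2 +%R (JacE f x i j) (erefl (a * _)))); apply: esym.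
have dsc : differentiable ( *:%R a) x by [].
have D := diffD Hd dsc.
have D3 : 'd ( *:%R a) x = ( *:%R a) :> ('rV[R]_n -> 'rV[R]_n) by apply: diff_val.
have D' : 'd g x = 'd f x \+ 'd ( *:%R a) x :> ('rV[R]_n -> 'rV[R]_n) := D.
have E1 := congr1 (fun h : 'rV[R]_n -> 'rV[R]_n => h (delta_mx 0 j) ord0 i) D'.
apply: (etrans E1).
apply: (etrans (congr1 (fun h => ('d f x 'e_j + h 'e_j) ord0 i) D3)).
move: ('d f x 'e_j) => w.
by rewrite !mxE eqxx.
Qed.

Lemma main_aux (p : pnorm) (f : 'rV[R]_n -> 'rV[R]_n) :
  lipschitz_map p f -> differentiable_everywhere f ->
  (WIC p f <->
   exists (gamma : R) (phi : 'rV[R]_n -> 'rV[R]_n),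
     [/\ differentiable_everywhere phi, lipschitz_map p phi,
         (lipconst p phi <= gamma%:E)%E
       & forall x, f x = - gamma *: x + phi x]).
Proof.
move=> [L0 HL0] Hdf.
pose L := Num.max L0 0.
have L0' : 0 <= L by rewrite le_max lexx orbT.
have HL : forall x y, vnorm p (f x - f y) <= L * vnorm p (x - y).
  move=> x y; apply: le_trans (HL0 x y) _; apply: ler_wpM2r.
    exact: vnorm_ge0.
  by rewrite le_max lexx.
clearbody L.
have WICE : WIC p f <-> forall x, mxmeasure p (Jac f x) <= 0.
  split.
    move=> H x; rewrite -lee_fin; apply: le_trans H.
    by apply: ereal_sup_ubound; exists x.
  by move=> H; apply: ge_ereal_sup => _ [x _ <-]; rewrite lee_fin; exact: H.
rewrite WICE; split.
  move=> Hw; exists L, (f + *:%R L); split.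
  - by move=> x; apply: differentiableD.
  - exists (L + L) => x y.
    have -> : (f + *:%R L) x - (f + *:%R L) y = (f x - f y) + L *: (x - y).
      by rewrite /= scalerBr opprD !addrA; congr (_ + _); rewrite addrAC.
    apply: le_trans (vnormD _ _ _) _; rewrite mulrDl lerD //.
    by apply: le_trans (vnormZ _ _ _) _; rewrite ger0_norm.
  - apply: ge_ereal_sup => _ [x _ <-]; rewrite lee_fin.
    apply: (fwd p (Jac f x) _ L L0').
    + by move=> i j; apply: Jac_lin_entry.
    + move=> j; have E := JacE f x j j; rewrite E.
      have H1 := diff_coord_bound p f x L (delta_mx 0 j) j L0' HL (Hdf x).
      have H2 : L * vnorm p (delta_mx 0 j : 'rV[R]_n) <= L.
        by apply: ler_piMr => //; exact: vnorm_delta.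
      have H3 := ler_norm (- ('d f x 'e_j ord0 j)); rewrite normrN in H3.
      move: H1 H2 H3; move: ('d f x 'e_j ord0 j) => d; move: (L * _) => c.
      lra.
    + by move=> j; move: (Hw x) => /mxmeasure_le0; apply.
  - by move=> x /=; rewrite scaleNr addrC addrK.
move=> [g [phi [Hd Hl Hc Hf]]] x.
have fE : f = phi + *:%R (- g).
  by apply/funext => y; rewrite Hf addrC.
apply/mxmeasure_le0; apply: (@back p _ (Jac phi x) g).
  move=> i j; rewrite fE.
  apply: (etrans (Jac_lin_entry phi (- g) x i j (Hd x))).
  by rewrite mulNr.
rewrite -lee_fin; apply: le_trans Hc.
by apply: ereal_sup_ubound; exists x.
Qed.

End Helpers.

Theorem mainTheorem1 (R : realType) (n : nat) (p : pnorm)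
    (f : 'rV[R]_n -> 'rV[R]_n) :
  lipschitz_map p f -> differentiable_everywhere f ->
  (WIC p f <->
   exists (gamma : R) (phi : 'rV[R]_n -> 'rV[R]_n),
     [/\ differentiable_everywhere phi, lipschitz_map p phi,
         (lipconst p phi <= gamma%:E)%E
       & forall x, f x = - gamma *: x + phi x]).
Proof. exact: (@main_aux R n p f). Qed.
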